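(* Let $n$ be a power of $2$ and consider the non-local hidden matching game on $n$. Its classical value $\omega_c$ (the maximum winning probability achievable by classical, i.e. local deterministic or shared-randomness, strategies) satisfies $$\omega_c \leq \frac{1}{2} + \frac{8\sqrt{n}\,\log n}{n-1}.$$
   Context: Let $n$ be a power of $2$, let $[n]$ be identified with $\{0,1\}^{\log n}$ (so that indices $i,j \in [n]$ are viewed as $\log n$-bit strings), and let $M_n$ be the set of all perfect matchings on $[n]$. In the non-local hidden matching game, Alice receives $x \in \{0,1\}^n$ and Bob receives $M \in M_n$, both uniformly distributed and independent. Alice outputs $a \in \{0,1\}^{\log n}$; Bob outputs an edge $(i,j) \in M$ and a string $b \in \{0,1\}^{\log n}$. They win iff $(a \oplus b)\cdot(i \oplus j) = x_i \oplus x_j$, where $\cdot$ is the inner product modulo $2$ and $\oplus$ is bitwise XOR. $\log$ denotes the base-$2$ logarithm. *)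

(* Defs.v *)
From mathcomp Require Import all_boot all_order all_algebra.
Set Implicit Arguments. Unset Strict Implicit. Unset Printing Implicit Defensive.
Import Order.TTheory GRing.Theory Num.Theory.
Local Open Scope ring_scope.

(* [n] with n = 2^k, identified with k-bit strings *)
Definition bits (k : nat) := {ffun 'I_k -> bool}.

Definition bxor k (u v : bits k) : bits k := [ffun t => u t (+) v t].

Definition bdot k (u v : bits k) : bool := \big[addb/false]_(t < k) (u t && v t).

Definition input k := {ffun bits k -> bool}.

(* A perfect matching on [n], encoded as the partner map M :
   the edges are the pairs {i, M i}; M is a fixed-point-free involution. *)
Definition is_pmatching k (M : {ffun bits k -> bits k}) : bool :=
  [forall i, (M (M i) == i) && (M i != i)].

Definition hm_win k (x : input k) (a : bits k) (ij : bits k * bits k) (b : bits k)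
  : bool :=
  bdot (bxor a b) (bxor ij.1 ij.2) == (x ij.1 (+) x ij.2).

Definition bob_valid k (Rnd : Type)
  (B : Rnd -> {ffun bits k -> bits k} -> (bits k * bits k) * bits k) : Prop :=
  forall r M, is_pmatching M -> M (B r M).1.1 = (B r M).1.2.

Definition hm_winprob (R : numFieldType) k (Rnd : finType) (p : Rnd -> R)
  (A : Rnd -> input k -> bits k)
  (B : Rnd -> {ffun bits k -> bits k} -> (bits k * bits k) * bits k) : R :=
  \sum_(r : Rnd) p r *
    ((\sum_(x : input k) \sum_(M : {ffun bits k -> bits k} | is_pmatching M)
        (hm_win x (A r x) (B r M).1 (B r M).2)%:R)
     / (#|{: input k}| * #|[pred M : {ffun bits k -> bits k} | is_pmatching M]|)%:R).

(* Main.v *)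
Require Import Defs.
From mathcomp Require Import all_boot all_order all_algebra all_fingroup.
From mathcomp Require Import ring lra zify.
Set Implicit Arguments. Unset Strict Implicit. Unset Printing Implicit Defensive.
Import Order.TTheory GRing.Theory Num.Theory.
Local Open Scope ring_scope.

Section Sgn.
Variable R : numDomainType.
Definition sgn (b : bool) : R := if b then -1 else 1.
Lemma sgnX (a b : bool) : sgn (a (+) b) = sgn a * sgn b.
Proof. by case: a; case: b; rewrite /sgn /= ?mulN1r ?mulr1 ?opprK ?mul1r. Qed.
Lemma sgn_sqr b : sgn b ^+ 2 = 1.
Proof. by case: b; rewrite /sgn ?sqrrN expr1n. Qed.
Lemma sgnN b : sgn (~~ b) = - sgn b.
Proof. by case: b; rewrite /sgn /= ?opprK. Qed.
End Sgn.

Section Flip.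
Variable I : finType.
Definition flip (j : I) (x : {ffun I -> bool}) : {ffun I -> bool} :=
  [ffun i => if i == j then ~~ x i else x i].
Lemma flipK j : involutive (flip j).
Proof. by move=> x; apply/ffunP=> i; rewrite !ffunE; case: eqP => //; rewrite negbK. Qed.
Lemma flip_inj j : injective (flip j).
Proof. exact: inv_inj (@flipK j). Qed.
Lemma sum_flip (R : nmodType) j (F : {ffun I -> bool} -> R) :
  \sum_x F (flip j x) = \sum_x F x.
Proof. by rewrite [RHS](reindex_inj (@flip_inj j)). Qed.
Definition xorv (h x : {ffun I -> bool}) : {ffun I -> bool} := [ffun i => x i (+) h i].
Lemma xorvK h : involutive (xorv h).
Proof. by move=> x; apply/ffunP=> i; rewrite !ffunE -addbA addbb addbF. Qed.
Lemma sum_xorv (R : nmodType) h (F : {ffun I -> bool} -> R) :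
  \sum_x F (xorv h x) = \sum_x F x.
Proof. by rewrite [RHS](reindex_inj (inv_inj (@xorvK h))). Qed.
End Flip.

Section Pointwise.
Variable R : realDomainType.
Lemma mono_bound (u v : R) a b : u ^+ a * v ^+ b <= u ^+ (a + b) * 1 + v ^+ (a + b) * 1
  -> True. Proof. by []. Qed.

Lemma even_abs (u : R) m : u ^+ (2 * m) = `|u| ^+ (2 * m).
Proof. by rewrite !exprM real_normK ?num_real. Qed.

Lemma prod_le (u v : R) a b : ~~ odd (a + b) ->
  u ^+ a * v ^+ b <= u ^+ (a + b) + v ^+ (a + b).
Proof.
move=> ev; have [m hm] : exists m, (a + b)%N = (2 * m)%N.
  by exists (a + b)./2; rewrite -[LHS]odd_double_half (negbTE ev) add0n -muln2 mulnC.
rewrite hm; apply: le_trans (ler_norm _) _.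
rewrite normrM !normrX (even_abs u) (even_abs v).
have [uv|vu] := leP `|u| `|v|.
- apply: le_trans (_ : `|v| ^+ (2 * m) <= _); last by rewrite lerDr exprn_ge0.
  rewrite -hm exprD; apply: ler_wpM2r; rewrite ?exprn_ge0 //; apply: lerXn2r; rewrite ?nnegrE //.
- apply: le_trans (_ : `|u| ^+ (2 * m) <= _); last by rewrite lerDl exprn_ge0.
  rewrite -hm exprD; apply: ler_wpM2l; rewrite ?exprn_ge0 //; apply: lerXn2r; rewrite ?nnegrE //; exact: ltW.
Qed.

Lemma key_ineq (u v : R) m :
  (u - v) * (u ^+ (2 * m).+1 - v ^+ (2 * m).+1) <=
  (2 * m).+1%:R * (u - v) ^+ 2 * (u ^+ (2 * m) + v ^+ (2 * m)).
Proof.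
rewrite subrXX /= [X in X <= _]mulrA -expr2 [_.+1%:R * _]mulrC -[X in _ <= X]mulrA.
apply: (ler_wpM2l (sqr_ge0 (u - v))).
apply: (@le_trans _ _ (\sum_(i < (2 * m).+1) (u ^+ (2 * m) + v ^+ (2 * m)))); last first.
  by rewrite sumr_const card_ord mulr_natl.
apply: ler_sum => i _.
have hi : (i <= 2 * m)%N by rewrite -ltnS.
have := @prod_le u v (2 * m - i) i; rewrite subnK // oddM andFb; exact.
Qed.
End Pointwise.

Section Khin.
Variables (R : realFieldType) (I : finType) (Rs : {pred I}) (s : I -> {ffun I -> bool} -> R).
Hypothesis s_inv : forall j t x, t \in Rs -> s j (flip t x) = s j x.
Definition Xf (x : {ffun I -> bool}) := \sum_(j in Rs) sgn R (x j) * s j x.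
Definition Vf (x : {ffun I -> bool}) := \sum_(j in Rs) s j x ^+ 2.

Lemma Xf_flip j x : j \in Rs -> Xf (flip j x) = Xf x - 2 * (sgn R (x j) * s j x).
Proof.
move=> jR; rewrite /Xf (bigD1 j) //= [in RHS](bigD1 j) //= ffunE eqxx sgnN s_inv //.
have -> : \sum_(i in Rs | i != j) sgn R (flip j x i) * s i (flip j x) =
          \sum_(i in Rs | i != j) sgn R (x i) * s i x.
  by apply: eq_bigr => i /andP[_ /negbTE ij]; rewrite ffunE ij s_inv.
ring.
Qed.

Lemma Vf_flip t x : t \in Rs -> Vf (flip t x) = Vf x.
Proof. by move=> tR; apply: eq_bigr => j _; rewrite s_inv. Qed.

Lemma step_j j m (g : {ffun I -> bool} -> R) : j \in Rs -> (forall x, 0 <= g x) ->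
  (forall t x, t \in Rs -> g (flip t x) = g x) ->
  \sum_(x : {ffun I -> bool}) sgn R (x j) * s j x * Xf x ^+ (2 * m).+1 * g x <=
  2 * (2 * m).+1%:R * \sum_(x : {ffun I -> bool}) s j x ^+ 2 * Xf x ^+ (2 * m) * g x.
Proof.
move=> jR g0 ginv.
pose P (x : {ffun I -> bool}) := sgn R (x j) * s j x.
have Pf x : P (flip j x) = - P x by rewrite /P ffunE eqxx sgnN s_inv // mulNr.
pose F (x : {ffun I -> bool}) := P x * Xf x ^+ (2 * m).+1 * g x.
pose G (x : {ffun I -> bool}) := P x ^+ 2 * Xf x ^+ (2 * m) * g x.
have eG x : s j x ^+ 2 * Xf x ^+ (2 * m) * g x = G x.
  by rewrite /G /P exprMn sgn_sqr mul1r.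
under [X in _ <= _ * X]eq_bigr do rewrite eG.
rewrite -/(F _).
have hF : \sum_(x : {ffun I -> bool}) F x = \sum_(x : {ffun I -> bool}) F (flip j x) by rewrite sum_flip.
have hG : \sum_(x : {ffun I -> bool}) G x = \sum_(x : {ffun I -> bool}) G (flip j x) by rewrite sum_flip.
have pt x : F x + F (flip j x) <= 2 * (2 * m).+1%:R * (G x + G (flip j x)).
  rewrite /F /G Pf Xf_flip // ginv // -/(P x).
  have K := key_ineq (Xf x) (Xf x - 2 * P x) m.
  have e2 : Xf x - (Xf x - 2 * P x) = 2 * P x by ring.
  rewrite e2 in K.
  have g0x := g0 x.
  set u := Xf x in K *; set v := Xf x - 2 * P x in K *.
  set N := (2 * m).+1%:R in K *.
  rewrite sqrrN.
  have -> : P x * u ^+ (2 * m).+1 * g x + - P x * v ^+ (2 * m).+1 * g x =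
     (P x * (u ^+ (2 * m).+1 - v ^+ (2 * m).+1)) * g x by ring.
  have -> : 2 * N * (P x ^+ 2 * u ^+ (2 * m) * g x + P x ^+ 2 * v ^+ (2 * m) * g x) =
     (2 * N * (P x ^+ 2 * (u ^+ (2 * m) + v ^+ (2 * m)))) * g x by ring.
  apply: ler_wpM2r => //.
  move: K; set a := P x * (u ^+ (2 * m).+1 - v ^+ (2 * m).+1).
  set b := N * (P x ^+ 2 * (u ^+ (2 * m) + v ^+ (2 * m))).
  have -> : 2 * P x * (u ^+ (2 * m).+1 - v ^+ (2 * m).+1) = 2 * a by rewrite /a; ring.
  have -> : N * (2 * P x) ^+ 2 * (u ^+ (2 * m) + v ^+ (2 * m)) = 4 * b by rewrite /b; ring.
  have -> : 2 * N * (P x ^+ 2 * (u ^+ (2 * m) + v ^+ (2 * m))) = 2 * b by rewrite /b; ring.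
  move=> K; lra.
have : \sum_(x : {ffun I -> bool}) (F x + F (flip j x)) <= \sum_(x : {ffun I -> bool}) 2 * (2 * m).+1%:R * (G x + G (flip j x)).
  by apply: ler_sum => x _; exact: pt.
rewrite -mulr_sumr !big_split /= -hF -hG.
move=> H; lra.
Qed.

Lemma khin Q : forall m, (m <= Q)%N -> forall g : {ffun I -> bool} -> R,
  (forall x, 0 <= g x) -> (forall t x, t \in Rs -> g (flip t x) = g x) ->
  \sum_(x : {ffun I -> bool}) Xf x ^+ (2 * m) * g x <= (4 * Q)%:R ^+ m * \sum_(x : {ffun I -> bool}) Vf x ^+ m * g x.
Proof.
elim=> [|m IH] mQ g g0 ginv; first by rewrite expr0 mul1r; apply: ler_sum => x _; rewrite !expr0.
have e x : Xf x ^+ (2 * m.+1) * g x = \sum_(j in Rs) sgn R (x j) * s j x * Xf x ^+ (2 * m).+1 * g x.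
  by rewrite -mulr_suml -mulr_suml -/(Xf x) -exprS mulnS.
under eq_bigr do rewrite e.
rewrite exchange_big /=.
apply: le_trans (ler_sum _ (fun j jR => step_j m jR g0 ginv)) _.
rewrite -mulr_sumr exchange_big /=.
have e2 x : \sum_(j in Rs) s j x ^+ 2 * Xf x ^+ (2 * m) * g x = Xf x ^+ (2 * m) * (Vf x * g x).
  by rewrite -mulr_suml -mulr_suml -/(Vf x) mulrCA mulrA.
under eq_bigr do rewrite e2.
have Vg0 x : 0 <= Vf x * g x by rewrite mulr_ge0 // sumr_ge0 // => j _; exact: sqr_ge0.
have Vginv t x : t \in Rs -> Vf (flip t x) * g (flip t x) = Vf x * g x.
  by move=> tR; rewrite Vf_flip // ginv.
have := IH (ltnW mQ) _ Vg0 Vginv.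
have S0 : 0 <= \sum_(x : {ffun I -> bool}) Vf x ^+ m * (Vf x * g x).
  by apply: sumr_ge0 => x _; rewrite mulr_ge0 // exprn_ge0 // sumr_ge0 // => j _; exact: sqr_ge0.
have -> : \sum_(x : {ffun I -> bool}) Vf x ^+ m.+1 * g x = \sum_(x : {ffun I -> bool}) Vf x ^+ m * (Vf x * g x).
  by apply: eq_bigr => x _; rewrite exprS mulrCA mulrA [Vf x * _]mulrC.
move=> H.
have c : 2 * (2 * m).+1%:R <= (4 * Q)%:R :> R.
  by rewrite -natrM ler_nat; move: mQ; clear; lia.
have c0 : 0 <= (4 * Q)%:R ^+ m :> R by rewrite exprn_ge0.
rewrite exprS -mulrA.
have c1 : 0 <= (4 * Q)%:R ^+ m * \sum_(x : {ffun I -> bool}) Vf x ^+ m * (Vf x * g x) by rewrite mulr_ge0.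
apply: le_trans (_ : 2 * (2 * m).+1%:R * ((4 * Q)%:R ^+ m * \sum_(x : {ffun I -> bool}) Vf x ^+ m * (Vf x * g x)) <= _).
  by apply: ler_wpM2l => //; rewrite mulr_ge0.
by apply: ler_wpM2r.
Qed.

End Khin.

Section PM.
Variables (R : realFieldType) (J : finType) (w z : J -> R).
Hypotheses (w0 : forall j, 0 <= w j) (z0 : forall j, 0 <= z j).

Lemma mono_prod (a b : R) q : 0 <= a -> 0 <= b -> 0 <= (a ^+ q - b ^+ q) * (a - b).
Proof.
move=> a0 b0; have [ab|ba] := leP a b.
- rewrite -mulrNN; apply: mulr_ge0; rewrite opprB subr_ge0 //; apply: lerXn2r; rewrite ?nnegrE //.
- apply: mulr_ge0; rewrite subr_ge0; last exact: ltW.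
  by apply: lerXn2r; rewrite ?nnegrE // ltW.
Qed.

Lemma sum_mul2 (a b : J -> R) : (\sum_i a i) * (\sum_j b j) = \sum_i \sum_j a i * b j.
Proof. by rewrite mulr_suml; apply: eq_bigr => i _; rewrite mulr_sumr. Qed.

Lemma cheb q : (\sum_j w j * z j ^+ q) * (\sum_j w j * z j) <=
               (\sum_j w j) * (\sum_j w j * z j ^+ q.+1).
Proof.
pose D := \sum_i \sum_j w i * w j * z j ^+ q * (z j - z i).
have E : (\sum_j w j) * (\sum_j w j * z j ^+ q.+1) -
         (\sum_j w j * z j ^+ q) * (\sum_j w j * z j) = D.
  rewrite [X in _ - X]mulrC !sum_mul2 /D -sumrB; apply: eq_bigr => i _.
  rewrite -sumrB; apply: eq_bigr => j _.
  by rewrite exprS; ring.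
have E2 : D = \sum_i \sum_j w i * w j * z i ^+ q * (z i - z j).
  rewrite /D exchange_big /=; apply: eq_bigr => i _; apply: eq_bigr => j _; ring.
have D0 : 0 <= D + D.
  rewrite {1}E2 /D -big_split /=; apply: sumr_ge0 => i _.
  rewrite -big_split /=; apply: sumr_ge0 => j _.
  have -> : w i * w j * z i ^+ q * (z i - z j) + w i * w j * z j ^+ q * (z j - z i) =
            w i * w j * ((z i ^+ q - z j ^+ q) * (z i - z j)) by ring.
  by apply: mulr_ge0; [apply: mulr_ge0 | apply: mono_prod].
move: E D0; lra.
Qed.

Lemma power_mean q : (\sum_j w j * z j) ^+ q.+1 <=
   (\sum_j w j) ^+ q * \sum_j w j * z j ^+ q.+1.
Proof.
elim: q => [|q IH]; first by rewrite !expr1 expr0 mul1r.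
have s0 : 0 <= \sum_j w j * z j by apply: sumr_ge0 => j _; rewrite mulr_ge0.
have W0 : 0 <= \sum_j w j by apply: sumr_ge0.
rewrite exprS mulrC.
apply: le_trans (ler_wpM2r s0 IH) _.
move: (cheb q.+1); set W := \sum_j w j; set A := \sum_j w j * z j ^+ q.+1.
set B := \sum_j w j * z j; set C := \sum_j w j * z j ^+ q.+2 => ch.
have -> : W ^+ q * A * B = W ^+ q * (A * B) by ring.
have -> : W ^+ q.+1 * C = W ^+ q * (W * C) by rewrite exprS mulrA [W ^+ q * W]mulrC.
by apply: ler_wpM2l => //; rewrite exprn_ge0.
Qed.
End PM.

Section Bits.
Variable k : nat.
Implicit Types u v w : bits k.

Lemma bdot_xorl u v w : bdot (bxor u v) w = bdot u w (+) bdot v w.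
Proof.
rewrite /bdot -big_split /=; apply: eq_bigr => t _.
by rewrite ffunE andb_addl.
Qed.

Lemma bdotC u v : bdot u v = bdot v u.
Proof. by apply: eq_bigr => t _; rewrite andbC. Qed.

Lemma bdot_xorr u v w : bdot u (bxor v w) = bdot u v (+) bdot u w.
Proof. by rewrite bdotC bdot_xorl !(bdotC u). Qed.

Definition e1 (t : 'I_k) : bits k := [ffun s => s == t].

Lemma bdot_e1 t u : bdot (e1 t) u = u t.
Proof.
rewrite /bdot (bigD1 t) //= ffunE eqxx /= big1 ?addbF // => s /negbTE st.
by rewrite ffunE st.
Qed.

Lemma card_bits : #|{: bits k}| = (2 ^ k)%N.
Proof. by rewrite card_ffun card_bool card_ord. Qed.

Lemma bxor_inv h : involutive (@bxor k h).
Proof. by move=> x; apply/ffunP=> t; rewrite !ffunE addKb. Qed.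

Lemma count_half (R : numDomainType) i j : i != j ->
  (\sum_(c : bits k) ((bdot c i != bdot c j)%:R : R)) *+ 2 = (2 ^ k)%:R.
Proof.
move=> ij; set d := bxor i j.
have ed c : (bdot c i != bdot c j) = bdot c d by rewrite bdot_xorr; case: (bdot c i); case: (bdot c j).
have [t dt] : exists t, d t.
  apply/existsP; apply: contraR ij; rewrite negb_exists => /forallP H.
  apply/eqP/ffunP => t; move: (H t); rewrite ffunE.
  by case: (i t); case: (j t).
under eq_bigr do rewrite ed.
have e2 : \sum_(c : bits k) ((bdot c d)%:R : R) = \sum_(c : bits k) ((~~ bdot c d)%:R : R).
  rewrite [LHS](reindex_inj (inv_inj (@bxor_inv (e1 t)))) /=.
  apply: eq_bigr => c _; rewrite bdot_xorl bdot_e1 dt.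
  by case: (bdot c d).
rewrite mulr2n {2}e2 -big_split /=.
rewrite (eq_bigr (fun _ => 1)); last by move=> c _; case: (bdot c d); rewrite /= ?addr0 ?add0r.
by rewrite sumr_const card_bits.
Qed.

End Bits.

Local Close Scope ring_scope.

Section Match.
Variable k : nat.
Local Notation I := (bits k).
Local Notation FM := {ffun I -> I}.

Lemma pmP (M : FM) : reflect (forall i, M (M i) = i /\ M i <> i) (is_pmatching M).
Proof.
apply: (iffP forallP) => H i.
  by case/andP: (H i) => /eqP -> /eqP.
by case: (H i) => /eqP -> /eqP ->.
Qed.

Definition mcount (i j : I) : nat := #|[set M : FM | is_pmatching M && (M i == j)]|.

Definition conjM (t : {perm I}) (M : FM) : FM := [ffun x => t (M (t x))].

Lemma mcount_le i j j' : j != i -> j' != i -> (mcount i j <= mcount i j')%N.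
Proof.
move=> ji j'i; set t := tperm j j'.
have tt x : t (t x) = x by rewrite tpermK.
have cK : involutive (conjM t) by move=> M; apply/ffunP=> x; rewrite !ffunE !tt.
rewrite /mcount -(card_imset _ (inv_inj cK)); apply: subset_leq_card.
apply/subsetP=> M' /imsetP[M]; rewrite inE => /andP[/pmP pm /eqP Mi] ->.
rewrite inE; apply/andP; split.
  apply/pmP=> x; rewrite /conjM !ffunE tt; case: (pm (t x)) => -> h; split; first exact: tt.
  by move=> e; apply: h; rewrite -[in RHS]e tt.
have ti : t i = i by rewrite tpermD // eq_sym.
by rewrite /conjM ffunE ti Mi tpermL.
Qed.

Lemma mcount_eq i j j' : j != i -> j' != i -> mcount i j = mcount i j'.
Proof. by move=> a b; apply/eqP; rewrite eqn_leq !mcount_le. Qed.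

Lemma mcount_ii i : mcount i i = 0%N.
Proof.
apply/eqP; rewrite cards_eq0; apply/eqP/setP=> M; rewrite !inE.
by apply/negP=> /andP[/pmP pm /eqP e]; case: (pm i).
Qed.

Lemma mcount_sum i : (\sum_j mcount i j)%N = #|[set M : FM | is_pmatching M]|.
Proof.
rewrite -sum1_card (partition_big (fun M : FM => M i) xpredT) //=.
apply: eq_bigr => j _; rewrite /mcount -sum1_card; apply: eq_bigl => M.
by rewrite !inE.
Qed.

Lemma mcount_val i j : j != i ->
  ((#|{: I}|.-1) * mcount i j)%N = #|[set M : FM | is_pmatching M]|.
Proof.
move=> ji; rewrite -(mcount_sum i) (bigD1 i) //= mcount_ii add0n.
rewrite (eq_bigr (fun _ => mcount i j)); last by move=> j' j'i; apply: mcount_eq.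
by rewrite sum_nat_const cardC1.
Qed.
End Match.

Local Open Scope ring_scope.

Section Main.
Variables (R : rcfType) (k : nat).
Local Notation I := (bits k).
Local Notation FM := {ffun I -> I}.
Local Notation X := {ffun I -> bool}.
Variable (Bf : FM -> (I * I) * I).
Hypothesis Hval : forall M, is_pmatching M -> M (Bf M).1.1 = (Bf M).1.2.

Definition hv (a : I) : X := [ffun t => bdot a t].
Definition yv (a : I) (x : X) : X := xorv (hv a) x.

Lemma win_sgn (x : X) (a : I) (ij : I * I) (b : I) :
  (hm_win x a ij b)%:R = 2^-1 * (1 + sgn R (bdot b (bxor ij.1 ij.2)) *
     (sgn R (yv a x ij.1) * sgn R (yv a x ij.2))) :> R.
Proof.
rewrite /hm_win /yv /hv !ffunE -!sgnX !bdot_xorl !bdot_xorr.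
case: (bdot a ij.1); case: (bdot a ij.2); case: (bdot b ij.1); case: (bdot b ij.2);
case: (x ij.1); case: (x ij.2); rewrite /sgn /=; by field.
Qed.

Lemma part_lemma (F : FM -> R) :
  \sum_(M | is_pmatching M) F M =
  \sum_i \sum_j \sum_(M | is_pmatching M && ((Bf M).1 == (i, j))) F M.
Proof.
rewrite (partition_big (fun M => (Bf M).1) xpredT) //= pair_big /=.
by apply: eq_bigr => -[i j] _.
Qed.

Definition U (i j : I) : R :=
  \sum_(M | is_pmatching M && ((Bf M).1 == (i, j))) sgn R (bdot (Bf M).2 (bxor i j)).

Definition Qf (y : X) : R := \sum_i \sum_j U i j * (sgn R (y i) * sgn R (y j)).

Lemma L2 (y : X) :
  \sum_(M | is_pmatching M) sgn R (bdot (Bf M).2 (bxor (Bf M).1.1 (Bf M).1.2)) *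
     (sgn R (y (Bf M).1.1) * sgn R (y (Bf M).1.2)) = Qf y.
Proof.
rewrite part_lemma; apply: eq_bigr => i _; apply: eq_bigr => j _.
rewrite /U mulr_suml; apply: eq_bigr => M /andP[_ /eqP ->] //.
Qed.

Lemma U_ii i : U i i = 0.
Proof.
rewrite /U big1 // => M /andP[pmM /eqP e].
have := Hval pmM; rewrite e /= => Mi.
by move/pmP: pmM => /(_ i) [_]; rewrite Mi.
Qed.

Definition Nm : R := #|[set M : FM | is_pmatching M]|%:R.

Lemma U_abs i j : `|U i j| <= (mcount i j)%:R.
Proof.
rewrite /mcount -sum1_card natr_sum /U.
apply: le_trans (ler_norm_sum _ _ _) _.
rewrite (eq_bigr (fun _ => 1)); last by move=> M _; case: (bdot _ _); rewrite /sgn ?normrN normr1.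
rewrite [X in _ <= X]big_mkcond [X in X <= _]big_mkcond /=.
apply: ler_sum => M _; rewrite inE.
case/boolP: (is_pmatching M && ((Bf M).1 == (i, j))) => [/andP[pmM /eqP e]|_].
  by have := Hval pmM; rewrite e /= => ->; rewrite pmM eqxx.
by case: ifP.
Qed.

Lemma sum_U_abs : \sum_i \sum_j `|U i j| <= Nm.
Proof.
rewrite /Nm -sum1_card natr_sum.
rewrite (eq_bigl (fun M : FM => is_pmatching M)); last by move=> M; rewrite inE.
rewrite part_lemma; apply: ler_sum => i _; apply: ler_sum => j _.
apply: le_trans (ler_norm_sum _ _ _) _.
by apply: ler_sum => M _; case: (bdot _ _); rewrite /sgn ?normrN normr1.
Qed.


Definition Rs (c : I) : {pred I} := [pred j : I | bdot c j].
Definition Ls (c : I) : {pred I} := [pred i : I | ~~ bdot c i].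
Definition sc (c : I) (j : I) : X -> R := Xf (R:=R) (Ls c) (fun i _ => U i j + U j i).
Definition Qc (c : I) : X -> R := Xf (R:=R) (Rs c) (sc c).

Lemma Qc_ind c y : Qc c y = \sum_j \sum_i (bdot c j && ~~ bdot c i)%:R *
    (sgn R (y j) * sgn R (y i) * (U i j + U j i)).
Proof.
rewrite /Qc /Xf big_mkcond; apply: eq_bigr => j _.
rewrite /sc /Xf mulr_sumr big_mkcond /= /Rs inE.
case: (bdot c j) => /=; last by rewrite big1 // => i _; rewrite mul0r.
apply: eq_bigr => i _; rewrite /Ls inE.
by case: (bdot c i); rewrite /= ?mul1r ?mul0r //; ring.
Qed.

Lemma decouple y : (\sum_c Qc c y) *+ 2 = (2 ^ k)%:R * Qf y.
Proof.
pose kap (j i : I) : R := \sum_c (bdot c j && ~~ bdot c i)%:R.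
have e1 : \sum_c Qc c y = \sum_j \sum_i kap j i * (sgn R (y j) * sgn R (y i) * (U i j + U j i)).
  under eq_bigr do rewrite Qc_ind.
  rewrite exchange_big /=; apply: eq_bigr => j _.
  rewrite exchange_big /=; apply: eq_bigr => i _.
  by rewrite /kap mulr_suml.
have e2 : \sum_j \sum_i kap j i * (sgn R (y j) * sgn R (y i) * (U i j + U j i)) =
   \sum_j \sum_i (kap j i + kap i j) * (sgn R (y j) * sgn R (y i) * U i j).
  have -> : \sum_j \sum_i kap j i * (sgn R (y j) * sgn R (y i) * (U i j + U j i)) =
    \sum_j \sum_i kap j i * (sgn R (y j) * sgn R (y i) * U i j) +
    \sum_j \sum_i kap j i * (sgn R (y j) * sgn R (y i) * U j i).
    rewrite -big_split; apply: eq_bigr => j _; rewrite -big_split; apply: eq_bigr => i _ /=.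
    ring.
  rewrite [X in _ + X]exchange_big /= -big_split; apply: eq_bigr => j _.
  rewrite -big_split; apply: eq_bigr => i _ /=; ring.
rewrite e1 e2 /Qf [in RHS]exchange_big /= -sumrMnl mulr_sumr; apply: eq_bigr => j _.
rewrite -sumrMnl mulr_sumr; apply: eq_bigr => i _.
case: (eqVneq i j) => [->|ij]; first by rewrite U_ii !mulr0 mul0rn mul0r mulr0.
rewrite -mulrnAl.
have -> : (kap j i + kap i j) *+ 2 = (2 ^ k)%:R.
  rewrite -(count_half R ij) /kap -big_split /=; congr (_ *+ 2); apply: eq_bigr => c _.
  by case: (bdot c i); case: (bdot c j); rewrite /= ?addr0 ?add0r.
by congr (_ * _); ring.
Qed.

Definition Sj (c j : I) : R := \sum_(i in Ls c) (U i j + U j i) ^+ 2.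

Lemma Sj_ge0 c j : 0 <= Sj c j.
Proof. by apply: sumr_ge0 => i _; apply: sqr_ge0. Qed.

Lemma sc_inv c j t x : t \in Rs c -> sc c j (flip t x) = sc c j x.
Proof.
move=> tR; apply: eq_bigr => i iL; rewrite ffunE.
case: eqP => // e; move: iL tR; rewrite e /Ls /Rs !inE => /negbTE ->.
by [].
Qed.

Lemma sc_zero c j x : Sj c j = 0 -> sc c j x = 0.
Proof.
move=> /psumr_eq0P H; rewrite /sc /Xf big1 // => i iL.
have := H (fun i _ => sqr_ge0 _) i iL; move/eqP; rewrite sqrf_eq0 => /eqP ->.
by rewrite mulr0.
Qed.

Definition Nx : R := #|{: X}|%:R.

Lemma Nx_gt0 : 0 < Nx.
Proof. by rewrite /Nx ltr0n; apply/card_gt0P; exists [ffun=> false]. Qed.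

Lemma mom_sc c j : \sum_(x : X) sc c j x ^+ (2 * k) <= (4 * k)%:R ^+ k * (Nx * Sj c j ^+ k).
Proof.
have := @khin R I (Ls c) (fun i _ => U i j + U j i) (fun _ _ _ _ => erefl) k k (leqnn k)
   (fun _ => 1) (fun _ => ler01) (fun _ _ _ => erefl).
under eq_bigr do rewrite mulr1.
under [X in _ <= _ * X -> _]eq_bigr do rewrite mulr1.
move=> H; apply: le_trans H _.
rewrite (eq_bigr (fun _ => Sj c j ^+ k)) // sumr_const /Nx.
by rewrite mulr_natl.
Qed.

Definition Wc (c : I) : R := \sum_(j in Rs c) Sj c j.

Lemma mom_V c : (0 < k)%N ->
  \sum_(x : X) Vf (R:=R) (Rs c) (sc c) x ^+ k <= (4 * k)%:R ^+ k * (Nx * Wc c ^+ k).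
Proof.
move=> k0.
pose w j := if j \in Rs c then Sj c j else 0.
have w0 j : 0 <= w j by rewrite /w; case: ifP => _ //; exact: Sj_ge0.
have Ww : \sum_j w j = Wc c by rewrite /Wc [RHS]big_mkcond.
pose zx (x : X) j := sc c j x ^+ 2 / Sj c j.
have z0 x j : 0 <= zx x j by rewrite /zx divr_ge0 ?sqr_ge0 ?Sj_ge0.
have eV x : Vf (R:=R) (Rs c) (sc c) x = \sum_j w j * zx x j.
  rewrite /Vf big_mkcond; apply: eq_bigr => j _; rewrite /w /zx.
  case: ifP => _; last by rewrite mul0r.
  have [S0|S0] := eqVneq (Sj c j) 0; first by rewrite (sc_zero x S0) S0 expr0n mul0r.
  by rewrite mulrC divfK.
have pm x := power_mean w0 (z0 x) k.-1.
have H1 : \sum_(x : X) Vf (R:=R) (Rs c) (sc c) x ^+ k <=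
     \sum_(x : X) (\sum_j w j) ^+ k.-1 * \sum_j w j * zx x j ^+ k.
  apply: ler_sum => x _; rewrite eV; have := pm x; by rewrite prednK.
apply: le_trans H1 _.
rewrite -mulr_sumr exchange_big /=.
have H2 j : \sum_(x : X) w j * zx x j ^+ k <= (4 * k)%:R ^+ k * Nx * w j.
  rewrite -mulr_sumr /w; case: ifP => _; last by rewrite !mulr0 mul0r.
  have [S0|S0] := eqVneq (Sj c j) 0; first by rewrite S0 !mul0r mulr0.
  have e x : zx x j ^+ k = sc c j x ^+ (2 * k) / Sj c j ^+ k by rewrite /zx expr_div_n exprM.
  under eq_bigr do rewrite e.
  rewrite -mulr_suml.
  have Sk : 0 < Sj c j ^+ k by rewrite exprn_gt0 // lt_def S0 Sj_ge0.
  rewrite mulrC -ler_pdivlMr; last by rewrite lt_def S0 Sj_ge0.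
  rewrite ler_pdivrMr //; apply: le_trans (mom_sc c j) _.
  by rewrite mulfK ?mulrA // lt0r_neq0 // lt_def S0 Sj_ge0.
apply: le_trans (_ : (\sum_j w j) ^+ k.-1 * \sum_j (4 * k)%:R ^+ k * Nx * w j <= _).
  apply: ler_wpM2l; first by rewrite exprn_ge0 // sumr_ge0.
  by apply: ler_sum => j _; exact: H2.
rewrite -mulr_sumr Ww.
have -> : Wc c ^+ k = Wc c ^+ k.-1 * Wc c by rewrite -exprSr prednK.
by rewrite le_eqVlt; apply/orP; left; apply/eqP; ring.
Qed.

Lemma mom_Q c : (0 < k)%N ->
  \sum_(x : X) Qc c x ^+ (2 * k) <= (4 * k)%:R ^+ k * ((4 * k)%:R ^+ k * (Nx * Wc c ^+ k)).
Proof.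
move=> k0.
have := @khin R I (Rs c) (sc c) (@sc_inv c) k k (leqnn k)
   (fun _ => 1) (fun _ => ler01) (fun _ _ _ => erefl).
under eq_bigr do rewrite mulr1.
under [X in _ <= _ * X -> _]eq_bigr do rewrite mulr1.
move=> H; apply: le_trans H _.
by apply: ler_wpM2l; [rewrite exprn_ge0 | exact: mom_V].
Qed.

Lemma sqr_add_le (a b : R) : (a + b) ^+ 2 <= 2 * (a ^+ 2 + b ^+ 2).
Proof.
rewrite -subr_ge0.
have -> : 2 * (a ^+ 2 + b ^+ 2) - (a + b) ^+ 2 = (a - b) ^+ 2 by ring.
exact: sqr_ge0.
Qed.

Lemma Wc_le c : Wc c <= 2 * \sum_i \sum_j U i j ^+ 2.
Proof.
pose ind (j i : I) : R := (bdot c j && ~~ bdot c i)%:R.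
have e1 : Wc c = \sum_j \sum_i ind j i * (U i j + U j i) ^+ 2.
  rewrite /Wc big_mkcond; apply: eq_bigr => j _; rewrite /Rs inE /ind.
  case: (bdot c j) => /=; last by rewrite big1 // => i _; rewrite mul0r.
  rewrite /Sj big_mkcond; apply: eq_bigr => i _; rewrite /Ls inE.
  by case: (bdot c i); rewrite /= ?mul1r ?mul0r.
rewrite e1.
apply: le_trans (_ : \sum_j \sum_i ind j i * (2 * (U i j ^+ 2 + U j i ^+ 2)) <= _).
  apply: ler_sum => j _; apply: ler_sum => i _.
  by apply: ler_wpM2l; [rewrite /ind ler0n | exact: sqr_add_le].
have e2 : \sum_j \sum_i ind j i * (2 * (U i j ^+ 2 + U j i ^+ 2)) =
   2 * \sum_j \sum_i (ind j i + ind i j) * U i j ^+ 2.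
  rewrite mulr_sumr.
  have -> : \sum_j \sum_i ind j i * (2 * (U i j ^+ 2 + U j i ^+ 2)) =
     \sum_j \sum_i 2 * (ind j i * U i j ^+ 2) + \sum_j \sum_i 2 * (ind j i * U j i ^+ 2).
    rewrite -big_split; apply: eq_bigr => j _; rewrite -big_split; apply: eq_bigr => i _ /=.
    ring.
  rewrite [X in _ + X]exchange_big /= -big_split; apply: eq_bigr => j _.
  rewrite mulr_sumr -big_split; apply: eq_bigr => i _ /=; ring.
rewrite e2; apply: ler_wpM2l => //.
rewrite [X in _ <= X]exchange_big /=.
apply: ler_sum => j _; apply: ler_sum => i _.
rewrite -[X in _ <= X]mul1r; apply: ler_wpM2r; first exact: sqr_ge0.
by rewrite /ind; case: (bdot c i); case: (bdot c j); rewrite /= ?addr0 ?add0r.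
Qed.

Lemma U_sq : (0 < k)%N -> \sum_i \sum_j U i j ^+ 2 <= Nm ^+ 2 / ((2 ^ k)%:R - 1).
Proof.
move=> k0.
have n1 : 0 < (2 ^ k)%:R - 1 :> R.
  by rewrite subr_gt0 natrX exprn_egt1 ?ltr1n // -lt0n.
have Ub i j : `|U i j| <= Nm / ((2 ^ k)%:R - 1).
  case: (eqVneq j i) => [->|ji]; first by rewrite U_ii normr0 divr_ge0 // ?ler0n ?ltW.
  apply: le_trans (U_abs i j) _.
  rewrite ler_pdivlMr // /Nm -(mcount_val ji) natrM card_bits mulrC.
  rewrite -subn1 natrB ?expn_gt0 //.
apply: le_trans (_ : \sum_i \sum_j `|U i j| * (Nm / ((2 ^ k)%:R - 1)) <= _).
  apply: ler_sum => i _; apply: ler_sum => j _.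
  by rewrite -real_normK ?num_real // expr2; apply: ler_wpM2l.
rewrite (eq_bigr (fun i => (\sum_j `|U i j|) * (Nm / ((2 ^ k)%:R - 1)))); last first.
  by move=> i _; rewrite mulr_suml.
rewrite -mulr_suml expr2 -mulrA; apply: ler_wpM2r; first by rewrite divr_ge0 ?ler0n ?ltW.
exact: sum_U_abs.
Qed.

Lemma shift_le c (A : X -> I) : \sum_(x : X) Qc c (yv (A x) x) ^+ (2 * k) <=
  (2 ^ k)%:R * \sum_(x : X) Qc c x ^+ (2 * k).
Proof.
apply: le_trans (_ : \sum_(x : X) \sum_(a : I) Qc c (yv a x) ^+ (2 * k) <= _).
  apply: ler_sum => x _; rewrite (bigD1 (A x)) //= lerDl.
  by apply: sumr_ge0 => a _; rewrite exprM exprn_ge0 // sqr_ge0.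
rewrite exchange_big /=.
rewrite (eq_bigr (fun _ => \sum_(x : X) Qc c x ^+ (2 * k))).
  by rewrite sumr_const card_bits mulr_natl.
move=> a _; exact: (sum_xorv (hv a) (fun x => Qc c x ^+ (2 * k))).
Qed.

Definition Tb : R := 8 * Num.sqrt ((2 ^ k)%:R) * k%:R / ((2 ^ k)%:R - 1).

Lemma n1_gt0 : (0 < k)%N -> 0 < (2 ^ k)%:R - 1 :> R.
Proof. by move=> k0; rewrite subr_gt0 natrX exprn_egt1 ?ltr1n // -lt0n. Qed.

Lemma Tb_ge0 : (0 < k)%N -> 0 <= Tb.
Proof.
move=> k0; rewrite /Tb; apply: divr_ge0; last exact: ltW (n1_gt0 k0).
by apply: mulr_ge0; [apply: mulr_ge0; [| exact: sqrtr_ge0] |]; rewrite ler0n.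
Qed.

Lemma Nm_ge0 : 0 <= Nm. Proof. exact: ler0n. Qed.

Lemma per_c c (A : X -> I) : (0 < k)%N ->
  \sum_(x : X) Qc c (yv (A x) x) <= Tb * (Nx * Nm).
Proof.
move=> k0.
set n : R := (2 ^ k)%:R.
have n1 := n1_gt0 k0.
set E := \sum_(x : X) `|Qc c (yv (A x) x)|.
apply: (@le_trans _ _ E); first by apply: ler_sum => x _; exact: ler_norm.
have E0 : 0 <= E by apply: sumr_ge0 => x _.
have Nx0 : 0 <= Nx := ltW Nx_gt0.
have TNN : 0 <= Tb * (Nx * Nm).
  by apply: mulr_ge0; [exact: Tb_ge0 | apply: mulr_ge0 => //; exact: Nm_ge0].
have k2 : (0 < 2 * k)%N by rewrite muln_gt0.
rewrite -(ler_pXn2r k2) ?nnegrE //.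
set W' := 2 * (Nm ^+ 2 / (n - 1)).
have W'0 : 0 <= W' by rewrite mulr_ge0 // divr_ge0 ?sqr_ge0 ?ltW.
have pm : E ^+ (2 * k) <= Nx ^+ (2 * k).-1 * \sum_(x : X) Qc c (yv (A x) x) ^+ (2 * k).
  have := @power_mean R X (fun _ => 1) (fun x => `|Qc c (yv (A x) x)|) (fun _ => ler01)
     (fun x => normr_ge0 _) (2 * k).-1.
  rewrite prednK //.
  under eq_bigr do rewrite mul1r.
  under [X in _ <= _ * X -> _]eq_bigr do rewrite mul1r -even_abs.
  by rewrite sumr_const.
apply: le_trans pm _.
have Wc0 : 0 <= Wc c by apply: sumr_ge0 => j _; exact: Sj_ge0.
have WW : Wc c ^+ k <= W' ^+ k.
  apply: lerXn2r; rewrite ?nnegrE //.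
  apply: le_trans (Wc_le c) _; rewrite /W'; apply: ler_wpM2l => //; exact: U_sq.
have K0 : 0 <= (4 * k)%:R ^+ k :> R by rewrite exprn_ge0.
apply: le_trans (_ : Nx ^+ (2 * k).-1 * (n * ((4 * k)%:R ^+ k * ((4 * k)%:R ^+ k * (Nx * W' ^+ k)))) <= _).
  apply: ler_wpM2l; first by rewrite exprn_ge0 ?ltW ?Nx_gt0.
  apply: le_trans (shift_le c A) _.
  apply: ler_wpM2l; first by rewrite ler0n.
  apply: le_trans (mom_Q c k0) _.
  apply: ler_wpM2l => //; apply: ler_wpM2l => //; apply: ler_wpM2l; first by rewrite ltW ?Nx_gt0.
  exact: WW.
set B1 := Nx ^+ 2 * 2 * (4 * k)%:R ^+ 2 * W'.
have eB : Nx ^+ (2 * k).-1 * (n * ((4 * k)%:R ^+ k * ((4 * k)%:R ^+ k * (Nx * W' ^+ k)))) = B1 ^+ k.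
  have eP : Nx ^+ (2 * k).-1 * Nx = Nx ^+ k * Nx ^+ k by rewrite -exprSr prednK // -exprD addnn -mul2n.
  transitivity (Nx ^+ (2 * k).-1 * Nx * (n * (4 * k)%:R ^+ k * (4 * k)%:R ^+ k * W' ^+ k)); first by ring.
  rewrite eP /n natrX /B1 !exprMn; ring.
rewrite eB exprM.
have d0 : n - 1 != 0 by rewrite gt_eqF.
have B10 : 0 <= B1.
  rewrite /B1; apply: mulr_ge0 => //; apply: mulr_ge0; last exact: sqr_ge0.
  by apply: mulr_ge0; [exact: sqr_ge0 | rewrite ler0n].
apply: lerXn2r; rewrite ?nnegrE ?sqr_ge0 //.
set C := 64 * k%:R ^+ 2 * Nx ^+ 2 * Nm ^+ 2.
have C0 : 0 <= C by rewrite /C !mulr_ge0 ?sqr_ge0.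
have eT : (Tb * (Nx * Nm)) ^+ 2 = C * n / (n - 1) ^+ 2.
  rewrite /Tb -/n.
  transitivity (64 * Num.sqrt n ^+ 2 * k%:R ^+ 2 * Nx ^+ 2 * Nm ^+ 2 / (n - 1) ^+ 2).
    by field.
  by rewrite sqr_sqrtr ?ler0n // /C; field.
have eB1 : B1 = C / (n - 1) by rewrite /B1 /W' /C natrM; field.
rewrite eT eB1 -subr_ge0.
have -> : C * n / (n - 1) ^+ 2 - C / (n - 1) = C / (n - 1) ^+ 2 by field.
by rewrite divr_ge0 ?sqr_ge0.
Qed.


Lemma sumQf (A : X -> I) : (0 < k)%N ->
  \sum_(x : X) Qf (yv (A x) x) <= 2 * (Tb * (Nx * Nm)).
Proof.
move=> k0.
set n : R := (2 ^ k)%:R.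
have n0 : 0 < n by rewrite ltr0n expn_gt0.
have eQ y : Qf y = n^-1 * ((\sum_c Qc c y) *+ 2).
  by rewrite decouple -/n mulrA mulVf ?mul1r // gt_eqF.
under eq_bigr do rewrite eQ.
rewrite -mulr_sumr sumrMnl exchange_big /=.
set S := \sum_c \sum_(x : X) Qc c (yv (A x) x).
have HS : S <= n * (Tb * (Nx * Nm)).
  apply: le_trans (_ : \sum_(c : I) Tb * (Nx * Nm) <= _).
    by apply: ler_sum => c _; exact: per_c.
  by rewrite sumr_const card_bits -mulr_natl.
have -> : n^-1 * (S *+ 2) = 2 * (S / n) by rewrite -mulr_natl; ring.
apply: ler_wpM2l => //; rewrite ler_pdivrMr // mulrC //.
Qed.

Lemma det_bound (A : X -> I) : (0 < k)%N ->
  (\sum_(x : input k) \sum_(M : FM | is_pmatching M) ((hm_win x (A x) (Bf M).1 (Bf M).2)%:R : R))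
   / (#|{: input k}| * #|[pred M : FM | is_pmatching M]|)%:R <= 2^-1 + Tb.
Proof.
move=> k0.
have eN : #|[pred M : FM | is_pmatching M]| = #|[set M : FM | is_pmatching M]|.
  by apply: eq_card => M; rewrite inE.
rewrite natrM eN -/Nm -/Nx.
have T0 := Tb_ge0 k0.
have [N0|N0] := eqVneq Nm 0.
  by rewrite N0 mulr0 invr0 mulr0 addr_ge0 // invr_ge0 ler0n.
have Nmp : 0 < Nm by rewrite lt_def N0 Nm_ge0.
rewrite ler_pdivrMr ?mulr_gt0 ?Nx_gt0 //.
have e1 x : \sum_(M : FM | is_pmatching M) ((hm_win x (A x) (Bf M).1 (Bf M).2)%:R : R) =
   2^-1 * (Nm + Qf (yv (A x) x)).
  under eq_bigr do rewrite win_sgn.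
  rewrite -mulr_sumr big_split /= L2; congr (_ * (_ + _)).
  by rewrite /Nm -sum1_card natr_sum; apply: eq_bigl => M; rewrite inE.
under eq_bigr do rewrite e1.
rewrite -mulr_sumr big_split /= sumr_const -/(Nx) .
have := sumQf A k0.
set S := \sum_(x : X) Qf (yv (A x) x).
move=> HS.
have -> : Nm *+ #|{: X}| = Nx * Nm by rewrite /Nx mulr_natl.
have -> : (2^-1 + Tb) * (Nx * Nm) = 2^-1 * (Nx * Nm + 2 * (Tb * (Nx * Nm))) by field.
by apply: ler_wpM2l; [rewrite invr_ge0 ler0n | rewrite lerD2l].
Qed.

End Main.

Theorem mainTheorem2 (R : rcfType) (k : nat) (k_gt0 : (0 < k)%N)
  (Rnd : finType) (p : Rnd -> R)
  (p_ge0 : forall r, 0 <= p r) (p_sum : \sum_(r : Rnd) p r = 1)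
  (A : Rnd -> input k -> bits k)
  (B : Rnd -> {ffun bits k -> bits k} -> (bits k * bits k) * bits k)
  (HB : bob_valid B) :
  hm_winprob p A B <=
    2^-1 + 8 * Num.sqrt ((2 ^ k)%:R) * k%:R / ((2 ^ k)%:R - 1).
Proof.
rewrite /hm_winprob.
apply: le_trans (_ : \sum_(r : Rnd) p r * (2^-1 + Tb R k) <= _); last first.
  by rewrite -mulr_suml p_sum mul1r.
apply: ler_sum => r _; apply: ler_wpM2l => //.
exact: (@det_bound R k (B r) (HB r) (A r) k_gt0).
Qed.
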